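(* For any pairwise distinct complex numbers $x_1,\dots,x_M$ and any function $f$ for which the expressions are defined, $$\mathcal A^{\pm}_{\{x\}}[f]=\mathcal A^{\mp}_{\{x\}}\!\left[-\frac{E^\pm_{\{x\}}}{E^\mp_{\{x\}}}f\right].$$
   Context: Let $\eta\in\mathbb C\setminus\{0\}$. For a family $\{x\}=\{x_1,\dots,x_M\}$ of complex numbers and $y\in\mathbb C$, $E^\pm_{\{x\}}(y)=\prod_{n=1}^M\frac{y-x_n\pm\eta}{y-x_n}$; at $y=x_m$ the ratio $E^\pm_{\{x\}}(x_m)/E^\mp_{\{x\}}(x_m)$ means $\prod_{n=1}^M\frac{x_m-x_n\pm\eta}{x_m-x_n\mp\eta}$ (the factor $n=m$ equals $-1$). With $V(x_1,\dots,x_M)=\prod_{1\le b<a\le M}(x_a-x_b)$ and $f$ a function defined at the $x_a$, $\mathcal A^\pm_{\{x\}}[f]=\det_{1\le a,b\le M}\big[x_a^{b-1}-f(x_a)(x_a\pm\eta)^{b-1}\big]/V(x_1,\dots,x_M)$. Here $-\frac{E^\pm_{\{x\}}}{E^\mp_{\{x\}}}f$ denotes the function $x_a\mapsto-\frac{E^\pm_{\{x\}}(x_a)}{E^\mp_{\{x\}}(x_a)}f(x_a)$. *)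

(* Defs.v *)
From HB Require Import structures.
From mathcomp Require Import all_boot all_order all_algebra.
From mathcomp Require Import complex.
From mathcomp Require Import Rstruct.
Set Implicit Arguments. Unset Strict Implicit. Unset Printing Implicit Defensive.
Import Order.TTheory GRing.Theory Num.Theory.
Local Open Scope ring_scope.

Notation CC := (complex Rdefinitions.R).

(* Sign convention: pm = true stands for the upper sign "+", pm = false for "-". *)
Definition pmsign (pm : bool) : CC := if pm then 1 else -1.

(* E^{pm}_{x}(y) / E^{-pm}_{x}(y), written as the product
   prod_n (y - x_n + pm eta)/(y - x_n - pm eta); at y = x_m this is exactly the
   convention of the paper (the factor n = m equals -1). *)
Definition Eratio (pm : bool) (eta : CC) (M : nat) (x : 'I_M -> CC) (y : CC) : CC :=
  \prod_(n < M) ((y - x n + pmsign pm * eta) / (y - x n - pmsign pm * eta)).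

Definition Vand (M : nat) (x : 'I_M -> CC) : CC :=
  \prod_(a < M) \prod_(b < M | (b < a)%N) (x a - x b).

(* A^{pm}_{x}[f] = det [x_a^{b-1} - f(x_a) (x_a pm eta)^{b-1}]_{a,b} / V(x).
   (0-based column index b here corresponds to exponent b-1 for 1-based b.) *)
Definition Aop (pm : bool) (eta : CC) (M : nat) (x : 'I_M -> CC) (f : CC -> CC) : CC :=
  \det (\matrix_(a < M, b < M) (x a ^+ b - f (x a) * (x a + pmsign pm * eta) ^+ b))
  / Vand x.

(* Main.v *)
Require Import Defs.
From HB Require Import structures.
From mathcomp Require Import all_boot all_order all_algebra.
From mathcomp Require Import complex.
From mathcomp Require Import Rstruct.
From mathcomp Require Import ring perm.
Import Order.TTheory GRing.Theory Num.Theory.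
Local Open Scope ring_scope.
Set Implicit Arguments. Unset Strict Implicit.

Definition G (M : nat) (w : 'I_M -> CC) : CC :=
  \prod_(i < M) \prod_(j < M | (i < j)%N) (w j - w i).

Lemma detV (M : nat) (w : 'I_M -> CC) :
  \det (\matrix_(a < M, b < M) (w a ^+ b)) = G w.
Proof.
rewrite -det_tr.
transitivity (\det (Vandermonde M (\row_(j < M) w j))).
  by congr (\det _); apply/matrixP => i j; rewrite !mxE.
rewrite det_Vandermonde; apply: eq_bigr => i _; apply: eq_bigr => j _; by rewrite !mxE.
Qed.

Lemma expand (M : nat) (u v c : 'I_M -> CC) :
  \det (\matrix_(a < M, b < M) (u a ^+ b + c a * v a ^+ b)) =
  \sum_(g : {ffun 'I_M -> bool})
     (\prod_(i < M) (if g i then c i else 1)) *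
     G (fun a => if g a then v a else u a).
Proof.
under [in RHS]eq_bigr do rewrite -detV.
rewrite /determinant.
transitivity (\sum_(s : 'S_M) \sum_(g : {ffun 'I_M -> bool}) ((-1) ^+ s *
   \prod_i (if g i then c i * v i ^+ s i else u i ^+ s i))).
  apply: eq_bigr => s _; rewrite -mulr_sumr -(bigA_distr_bigA (fun i (b : bool) => if b then c i * v i ^+ s i else u i ^+ s i)); congr (_ * _).
  by apply: eq_bigr => i _; rewrite big_bool /= mxE addrC.
rewrite exchange_big /=; apply: eq_bigr => g _.
rewrite mulr_sumr; apply: eq_bigr => s _.
rewrite mulrCA; congr (_ * _).
rewrite -big_split /=; apply: eq_bigr => i _.
by rewrite mxE; case: (g i); rewrite ?mul1r.
Qed.

Lemma prod_pairs (M : nat) (F : 'I_M -> 'I_M -> CC) :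
  \prod_(i < M) \prod_(j < M) F i j =
  \prod_(i < M) F i i * \prod_(i < M) \prod_(j < M | (i < j)%N) (F i j * F j i).
Proof.
have -> : \prod_(i < M) \prod_(j < M | (i < j)%N) (F i j * F j i) =
   \prod_(i < M) (\prod_(j < M | (i < j)%N) F i j * \prod_(j < M | (i < j)%N) F j i).
  by apply: eq_bigr => i _; rewrite big_split.
rewrite big_split /= mulrCA.
have -> : \prod_(i < M) \prod_(j < M | (i < j)%N) F j i =
          \prod_(i < M) \prod_(j < M | (j < i)%N) F i j.
  transitivity (\prod_(i < M) \prod_(j < M) (if (i < j)%N then F j i else 1)).
    by apply: eq_bigr => i _; rewrite big_mkcond.
  by rewrite exchange_big /=; apply: eq_bigr => i _; rewrite [RHS]big_mkcond.
rewrite -!big_split /=; apply: eq_bigr => i _.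
have -> : F i i = \prod_(j < M | j == i) F i j by rewrite big_pred1_eq.
rewrite [X in _ = X * _]big_mkcond [X in _ = _ * (X * _)]big_mkcond [X in _ = _ * (_ * X)]big_mkcond.
rewrite -!big_split /=; apply: eq_bigr => j _.
have [->|ne] := eqVneq j i; first by rewrite ltnn mul1r mulr1.
case: (ltngtP i j) => h; rewrite ?mul1r ?mulr1 //.
by move: ne; rewrite -val_eqE /= h eqxx.
Qed.

Lemma pair_id (gi gj : bool) (a b e : CC) : a - b - e != 0 -> b - a - e != 0 ->
  (if gi then (a - b + e) / (a - b - e) else 1) *
  (if gj then (b - a + e) / (b - a - e) else 1) *
  ((if gj then b + - e else b) - (if gi then a + - e else a)) =
  (if gj then b + e else b) - (if gi then a + e else a).
Proof.
move=> h1 h2.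
have h3 : a - b + e != 0.
  have -> : a - b + e = - (b - a - e) by ring.
  by rewrite oppr_eq0.
case: gi; case: gj => /=; rewrite ?mul1r ?mulr1.
all: try (by field; rewrite ?h1 ?h2 ?h3).
Qed.

Lemma pms_ne0 pm (eta : CC) : eta != 0 -> pmsign pm * eta != 0.
Proof. by move=> h; rewrite /pmsign; case: pm; rewrite ?mul1r ?mulN1r ?oppr_eq0. Qed.

Lemma pms_neg pm (eta : CC) : pmsign (~~ pm) * eta = - (pmsign pm * eta).
Proof. by rewrite /pmsign; case: pm; rewrite ?mulN1r ?mul1r ?opprK. Qed.

Lemma pms_hne pm (eta : CC) M (x : 'I_M -> CC) : (forall m n, x m - x n != eta) ->
  forall m n, x m - x n - pmsign pm * eta != 0.
Proof.
move=> H m n; rewrite /pmsign; case: pm; rewrite ?mul1r ?mulN1r ?subr_eq0 ?H //.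
apply: contra (H n m) => /eqP E; apply/eqP.
by rewrite -[x n - x m]opprB -[eta]opprK -E; ring.
Qed.

Unset Implicit Arguments.
Theorem mainTheorem5 (pm : bool) (eta : CC) (M : nat) (x : 'I_M -> CC) (f : CC -> CC) :
  eta != 0 ->
  injective x ->
  (forall m n : 'I_M, x m - x n != eta) ->
  Aop pm eta x f =
  Aop (~~ pm) eta x (fun y => - Eratio pm eta x y * f y).
Proof.
move=> eta0 _ H.
have e0 := pms_ne0 pm eta0.
have hne := pms_hne pm H.
have eN := pms_neg pm eta.
set e := pmsign pm * eta.
rewrite /Aop; congr (_ / _).
set R := fun y => Eratio pm eta x y.
have -> : (\matrix_(a < M, b < M) (x a ^+ b - f (x a) * (x a + pmsign pm * eta) ^+ b))
  = \matrix_(a < M, b < M) (x a ^+ b + (fun i => - f (x i)) a * (fun i => x i + e) a ^+ b).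
  by apply/matrixP => a b; rewrite !mxE mulNr.
have -> : (\matrix_(a < M, b < M) (x a ^+ b - (- R (x a) * f (x a)) * (x a + pmsign (~~ pm) * eta) ^+ b))
  = \matrix_(a < M, b < M) (x a ^+ b + (fun i => R (x i) * f (x i)) a * (fun i => x i + - e) a ^+ b).
  by apply/matrixP => a b; rewrite !mxE eN /e; ring.
rewrite (expand x (fun i => x i + e) (fun i => - f (x i))).
rewrite (expand x (fun i => x i + - e) (fun i => R (x i) * f (x i))).
apply: eq_bigr => g _.
have -> : \prod_(i < M) (if g i then - f (x i) else 1) =
   (\prod_(i < M) (if g i then -1 else 1)) * \prod_(i < M) (if g i then f (x i) else 1).
  by rewrite -big_split; apply: eq_bigr => i _ /=; case: (g i); rewrite ?mulN1r ?mulr1.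
have -> : \prod_(i < M) (if g i then R (x i) * f (x i) else 1) =
   (\prod_(i < M) (if g i then R (x i) else 1)) * \prod_(i < M) (if g i then f (x i) else 1).
  by rewrite -big_split; apply: eq_bigr => i _ /=; case: (g i); rewrite ?mulr1.
rewrite mulrAC [RHS]mulrAC; congr (_ * _).
have -> : \prod_(i < M) (if g i then R (x i) else 1) =
  \prod_(i < M) \prod_(n < M) (if g i then (x i - x n + e) / (x i - x n - e) else 1).
  apply: eq_bigr => i _; case: (g i); last by rewrite big1.
  by rewrite /R /Eratio.
rewrite prod_pairs.
have -> : \prod_(i < M) (if g i then (x i - x i + e) / (x i - x i - e) else 1) =
   \prod_(i < M) (if g i then -1 else 1).
  apply: eq_bigr => i _; case: (g i) => //.
  by rewrite subrr add0r sub0r invrN mulrN divff.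
rewrite -mulrA; congr (_ * _).
rewrite /G -big_split /=; apply: eq_bigr => i _.
rewrite -big_split /=; apply: eq_bigr => j _.
by rewrite pair_id.
Qed.
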